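(* Let $w$ be a word and $TG(w) = (V, E_1, \dots, E_T)$ the temporal graph it represents, with start points $S_1 < \dots < S_T$, and suppose $TG(w)$ is connected in every timestep. Then for every vertex $v_x \in V$: $x \in \mathrm{letters}(w[S_t, S_{t+d(v_x)+1} - 1])$ for all $t \in [1, T - d(v_x) - 2]$, and $x \in \mathrm{letters}(w[S_{T - d(v_x) - 1}, |w|])$.
   Context: Words are over $\Sigma=\{1,\dots,n\}$; $w[i]$ is the $i$-th letter, $w[i,j]$ the factor $w[i]\cdots w[j]$, $\mathrm{letters}(u)$ the set of symbols occurring in $u$, $\pi_{\mathcal S}(w)$ the subsequence of $w$ of all occurrences of symbols in $\mathcal S$. Symbols $x,y$ alternate in $w$ if $\pi_{\{x,y\}}(w) \in \{(xy)^k, (xy)^kx, (yx)^k, (yx)^ky : k \ge 0\}$. $G(w)$ has vertex set $V=\{v_1,\dots,v_n\}$ and undirected edge $(v_x,v_y)$ iff $x\neq y$ alternate in $w$; $d(v)$ is the degree of $v$ in $G(w)$. Start points: $S_1=1$, and $S_i$ is the least index $j>S_{i-1}$ with $w[j] \in \mathrm{letters}(w[S_{i-1},j-1])$; $S_1<\dots<S_T$ are all start points. The $t$-th timestep factor is $w[S_t,S_{t+1}-1]$ ($t<T$) or $w[S_T,|w|]$ ($t=T$). $TG(w)=(V,E_1,\dots,E_T)$ with $E_t$ the set of edges $(v_x,v_y)$ of $G(w)$ with $x$ or $y$ occurring in the $t$-th timestep factor. Connected in every timestep means $(V,E_t)$ is connected for all $t$. *)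

(* Defs.v *)
From mathcomp Require Import all_boot.
From mathcomp Require Import boolp.
Set Implicit Arguments. Unset Strict Implicit. Unset Printing Implicit Defensive.

(* Words over Sigma = {1,...,n} are sequences of naturals; positions are 1-indexed. *)

Definition letter (w : seq nat) (j : nat) : nat := nth 0 w j.-1.
(* w[i, j] = w[i] ... w[j] (1-indexed, empty if j < i) *)
Definition factor (w : seq nat) (i j : nat) : seq nat := drop i.-1 (take j w).
Definition letters (u : seq nat) : seq nat := undup u.

Definition proj2 (x y : nat) (w : seq nat) : seq nat :=
  filter (fun c => (c == x) || (c == y)) w.
Definition altpat (x y k : nat) : seq nat := flatten (nseq k [:: x; y]).

Definition alternate (w : seq nat) (x y : nat) : Prop :=
  exists k : nat, let s := proj2 x y w in
    s = altpat x y k \/ s = rcons (altpat x y k) x \/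
    s = altpat y x k \/ s = rcons (altpat y x k) y.

(* edge (v_x, v_y) of G(w), vertices v_1..v_n identified with 1..n *)
Definition Gedge (n : nat) (w : seq nat) (x y : nat) : bool :=
  [&& 1 <= x <= n, 1 <= y <= n, x != y & `[< alternate w x y >] ].

Definition degree (n : nat) (w : seq nat) (x : nat) : nat :=
  count (fun y => Gedge n w x y) (iota 1 n).

Definition next_start (w : seq nat) (s : nat) : option nat :=
  ohead [seq j <- iota s.+1 (size w - s) | letter w j \in letters (factor w s j.-1)].

Fixpoint starts_aux (w : seq nat) (fuel s : nat) : seq nat :=
  match fuel with
  | 0 => [:: s]
  | f.+1 => s :: (match next_start w s with
                  | Some j => starts_aux w f j
                  | None => [::]
                  end)
  end.

(* [:: S_1; ...; S_T] ; fuel |w| suffices since start points strictly increase in [1,|w|] *)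
Definition starts (w : seq nat) : seq nat := starts_aux w (size w) 1.

Definition T (w : seq nat) : nat := size (starts w).
Definition S (w : seq nat) (t : nat) : nat := nth 0 (starts w) t.-1.

Definition timestep (w : seq nat) (t : nat) : seq nat :=
  if t < T w then factor w (S w t) (S w t.+1 - 1) else factor w (S w (T w)) (size w).

Definition Eedge (n : nat) (w : seq nat) (t : nat) (x y : nat) : bool :=
  Gedge n w x y && ((x \in letters (timestep w t)) || (y \in letters (timestep w t))).

Definition connected_at (n : nat) (w : seq nat) (t : nat) : Prop :=
  forall u v, 1 <= u <= n -> 1 <= v <= n ->
    exists p : seq nat, path (Eedge n w t) u p /\ last u p = v.

Definition connected_every_timestep (n : nat) (w : seq nat) : Prop :=
  forall t, 1 <= t <= T w -> connected_at n w t.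

(* Main.v *)
Require Import Defs.
From mathcomp Require Import all_boot.
From mathcomp Require Import boolp zify.
Set Implicit Arguments. Unset Strict Implicit.

Lemma next_start_bound w s j : s <= size w -> next_start w s = Some j -> s < j <= size w.
Proof.
move=> hs; rewrite /next_start.
case E: [seq _ <- _ | _] => [|h t] //= [<-].
have : h \in [seq j <- iota s.+1 (size w - s) | letter w j \in letters (factor w s j.-1)].
  by rewrite E mem_head.
rewrite mem_filter mem_iota => /andP[_ /andP[h1 h2]].
apply/andP; split => //; lia.
Qed.

Lemma starts_aux_prop w f s s' : 1 <= s <= size w -> s' < s ->
  path ltn s' (starts_aux w f s) && all (fun j => 1 <= j <= size w) (starts_aux w f s).
Proof.
elim: f s s' => [|f IH] s s' hs hs' /=.
  by rewrite hs hs'.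
case E: (next_start w s) => [j|] /=.
  have hj := @next_start_bound w s j (andP hs).2 E.
  have /andP[h1 h2] := IH j s ltac:(lia) ltac:(lia).
  by rewrite hs' h1 hs h2.
by rewrite hs' hs.
Qed.

Lemma starts_prop w : w != [::] -> sorted ltn (starts w) && all (fun j => 1 <= j <= size w) (starts w).
Proof.
move=> hw; rewrite /starts.
have hs : 1 <= 1 <= size w by case: w hw.
have /andP[h1 h2] := @starts_aux_prop w (size w) 1 0 hs (ltnSn 0).
by rewrite (path_sorted h1) h2.
Qed.

Lemma T_nil : T [::] = 1. Proof. by []. Qed.

Definition endp w t := if t < T w then S w t.+1 - 1 else size w.

Lemma timestepE w t : t <= T w -> timestep w t = factor w (S w t) (endp w t).
Proof.
move=> h; rewrite /timestep /endp. case: ifP => // h'.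
by have -> : t = T w by lia.
Qed.

Section SProps.
Variable w : seq nat.
Hypothesis hw : w != [::].

Lemma S_bound t : 1 <= t <= T w -> 1 <= S w t <= size w.
Proof.
move=> ht; have /andP[_ /allP h] := starts_prop hw.
apply: h; rewrite /S; apply: mem_nth; rewrite /T in ht; by case: t ht => // t1 /andP[_ ].
Qed.

Lemma S_lt i j : 1 <= i -> i < j -> j <= T w -> S w i < S w j.
Proof.
move=> hi hij hj; have /andP[h _] := starts_prop hw.
case: i hi hij => // i _; case: j hj => // j hj hij.
rewrite /S /=; rewrite /T in hj; apply: (sorted_ltn_nth ltn_trans) => //; rewrite ?inE /=; lia.
Qed.

Lemma S_le i j : 1 <= i -> i <= j -> j <= T w -> S w i <= S w j.
Proof.
move=> hi; rewrite leq_eqVlt => /orP[/eqP->//|hij] hj.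
by apply: ltnW; apply: S_lt.
Qed.

Lemma endp_ge t : 1 <= t <= T w -> S w t <= endp w t.
Proof.
move=> /andP[h1 h2]; rewrite /endp; case: ifP => ht.
  have := S_lt h1 (ltnSn t) ht; lia.
by have := S_bound (t:=t); rewrite h1 h2 => /(_ isT); lia.
Qed.

Lemma endp_le t : 1 <= t <= T w -> endp w t <= size w.
Proof.
move=> /andP[h1 h2]; rewrite /endp; case: ifP => ht //.
have := @S_bound t.+1; rewrite ht => /(_ isT); lia.
Qed.
End SProps.

Lemma factor_split w i j k : i.-1 <= j -> j <= k -> k <= size w ->
  factor w i k = factor w i j ++ factor w j.+1 k.
Proof.
move=> hij hjk hk; rewrite /factor /=.
rewrite -{1}(cat_take_drop j (take k w)) (take_takel _ hjk).
rewrite drop_cat size_take_min.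
case: ifP => h //.
have -> : i.-1 = minn j (size w) by lia.
by rewrite subnn drop0 -size_take_min drop_size.
Qed.

Lemma window_split w a m : w != [::] -> 1 <= a -> a + m + 1 <= T w ->
  factor w (S w a) (endp w (a + m).+1) =
  factor w (S w a) (endp w (a + m)) ++ timestep w (a + m).+1.
Proof.
move=> hw ha hT.
have hS := @S_bound w hw (a + m).+1 ltac:(lia).
have e : endp w (a + m) = S w (a + m).+1 - 1 by rewrite /endp ifT //; lia.
have hle := @S_le w hw a (a + m).+1 ha ltac:(lia) ltac:(lia).
have hge := @endp_ge w hw (a + m).+1 ltac:(lia).
have hsz := @endp_le w hw (a + m).+1 ltac:(lia).
have e2 : S w (a + m).+1 = (endp w (a + m)).+1 by rewrite e; lia.
rewrite timestepE; last by lia.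
rewrite e2; apply: factor_split; rewrite -?e2; lia.
Qed.

Definition neqr : rel nat := fun u v => u != v.

Lemma altpat_rcons x y k : rcons (altpat x y k) x = x :: altpat y x k.
Proof. by elim: k => //= k IH; rewrite /altpat /= -/(altpat x y k) -/(altpat y x k) IH. Qed.

Lemma alt_path x y k a : x != y -> a != x -> path neqr a (altpat x y k).
Proof.
elim: k a => [|k IH] a hxy hax //=.
rewrite -/(altpat x y k) /= /neqr hax hxy /=.
by apply: IH; rewrite // eq_sym.
Qed.

Lemma alt_sorted w x y : x != y -> alternate w x y -> sorted neqr (proj2 x y w).
Proof.
move=> hxy [k /= [->|[->|[->|->]]]].
- apply: (@path_sorted _ _ y); apply: alt_path => //; by rewrite eq_sym.
- rewrite altpat_rcons /=; apply: alt_path; by rewrite // eq_sym.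
- apply: (@path_sorted _ _ x); apply: alt_path => //; by rewrite eq_sym.
- rewrite altpat_rcons /=; apply: alt_path; by rewrite // eq_sym.
Qed.

Lemma no_yy p y q : ~~ sorted neqr (p ++ y :: y :: q).
Proof.
elim: p => [|h p IH] /=; first by rewrite /neqr eqxx.
apply/negP => /path_sorted; exact/negP.
Qed.

Lemma key w x y A F C : x != y -> alternate w x y -> w = A ++ F ++ C ->
  x \notin F -> 1 < count_mem y F -> False.
Proof.
move=> hxy halt hw hxF hc.
have hs := alt_sorted hxy halt.
set G := proj2 x y F.
have hG : all (pred1 y) G.
  apply/allP => z; rewrite /G /proj2 mem_filter => /andP[/orP[/eqP->|//] hz].
  by rewrite hz in hxF.
have hsz : 1 < size G.
  rewrite /G /proj2 size_filter; apply: leq_trans hc _; apply: sub_count => z /=.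
  by move/eqP => ->; rewrite eqxx orbT.
move/all_pred1P: hG => hG.
move: hsz hG; case: (size G) => [|[|k]] //= _ hG.
move: hs; rewrite hw /proj2 !filter_cat -/(proj2 x y F) -/G hG /=.
by move/negP: (no_yy (proj2 x y A) y (nseq k y ++ proj2 x y C)).
Qed.

Lemma factor_suffix w i i' k z : i <= i' -> z \in factor w i' k -> z \in factor w i k.
Proof.
move=> h; rewrite /factor.
have -> : i'.-1 = (i'.-1 - i.-1) + i.-1 by lia.
by rewrite -drop_drop => /mem_drop.
Qed.

Lemma factor_decomp w i j : w = take i.-1 (take j w) ++ factor w i j ++ drop j w.
Proof. by rewrite /factor catA !cat_take_drop. Qed.

Lemma T_ge2 w : 2 <= T w -> w != [::].
Proof. by case: w. Qed.

Section Main.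
Variables (n : nat) (w : seq nat) (x : nat).
Hypothesis Hw : all (fun c => 1 <= c <= n) w.
Hypothesis Hconn : connected_every_timestep n w.
Hypothesis Hx : 1 <= x <= n.
Hypothesis hw : w != [::].

Definition N := filter (Gedge n w x) (iota 1 n).

Lemma ts_hit t : 2 <= n -> 1 <= t <= T w -> x \notin timestep w t ->
  0 < count (mem N) (timestep w t).
Proof.
move=> hn ht hxt.
pose v := if x == 1 then 2 else 1.
have hv : 1 <= v <= n by rewrite /v; case: ifP; lia.
have hvx : v != x by rewrite /v; case: ifP => /eqP; lia.
have [p [hp hl]] := Hconn ht Hx hv.
case: p hp hl => [|y p] /=; first by move=> _ e; rewrite e eqxx in hvx.
move=> /andP[/andP[hg hl'] _] _.
rewrite -has_count; apply/hasP; exists y.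
  move: hl'; rewrite /letters !mem_undup (negbTE hxt) /= => ->.
  done.
suff hyN : y \in N by exact: hyN.
rewrite /N mem_filter hg mem_iota.
by move: hg; rewrite /Gedge => /and4P[_ /andP[h1 h2] _ _]; lia.
Qed.

Lemma window_count a m : 2 <= n -> 1 <= a -> a + m <= T w ->
  x \notin factor w (S w a) (endp w (a + m)) ->
  m < count (mem N) (factor w (S w a) (endp w (a + m))).
Proof.
move=> hn ha.
elim: m => [|m IH] hT.
  rewrite addn0 -timestepE; last by lia.
  by apply: ts_hit => //; lia.
rewrite addnS window_split //; last by lia.
rewrite mem_cat negb_or count_cat => /andP[h1 h2].
have := IH ltac:(lia) h1.
have := ts_hit hn (t := (a + m).+1) ltac:(lia) h2.
lia.
Qed.

Lemma window_mem a : 1 <= a -> a + degree n w x <= T w ->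
  x \in factor w (S w a) (endp w (a + degree n w x)).
Proof.
move=> ha hT.
case: (leqP 2 n) => hn; last first.
  have ex1 : x = 1 by lia.
  have en : n = 1 by lia.
  have d0 : degree n w x = 0 by rewrite en ex1.
  rewrite d0 addn0.
  have hb := @S_bound w hw a ltac:(lia).
  have hge := @endp_ge w hw a ltac:(lia).
  have hle := @endp_le w hw a ltac:(lia).
  have : 0 < size (factor w (S w a) (endp w a)).
    rewrite /factor size_drop size_take_min; lia.
  case E: (factor w (S w a) (endp w a)) => [|z f] // _.
  have : z \in w.
    have : z \in factor w (S w a) (endp w a) by rewrite E mem_head.
    by rewrite /factor => /mem_drop /mem_take.
  move/(allP Hw) => /=; rewrite ex1 => hz.
  have -> : 1 = z by lia.
  exact: mem_head.
set d := degree n w x.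
set F := factor w (S w a) (endp w (a + d)).
apply/negPn/negP => hxF.
have hc := window_count hn ha hT hxF.
have hsN : size N = d by rewrite /N size_filter.
case: (boolP (has (fun y => 1 < count_mem y F) N)).
  move/hasP => [y hy hcy].
  move: hy; rewrite /N mem_filter /Gedge => /andP[/and4P[_ _ hxy /asboolP halt] _].
  exact: (key hxy halt (factor_decomp w (S w a) (endp w (a + d))) hxF hcy).
move/hasPn => hall.
pose G := filter (mem N) F.
have hu : uniq G.
  apply: count_mem_uniq => z.
  have hle : count_mem z G <= 1.
    case: (boolP (z \in N)) => hzN.
      rewrite /G count_filter.
      apply: (@leq_trans (count_mem z F)).
        by apply: sub_count => u /andP[].
      by rewrite leqNgt; apply: hall.
    rewrite /G count_filter (eq_count (a2 := pred0)) ?count_pred0 //.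
    by move=> u /=; apply/andP => -[/eqP-> h]; rewrite h in hzN.
  case hz: (z \in G).
    by move: hz; rewrite -has_pred1 has_count; lia.
  by apply/eqP; rewrite -leqn0 leqNgt -has_count has_pred1 hz.
have hsub : {subset G <= N} by move=> z; rewrite mem_filter => /andP[].
have := uniq_leq_size hu hsub.
rewrite /G size_filter hsN => h.
by have := leq_ltn_trans h hc; rewrite ltnn.
Qed.
End Main.

Unset Implicit Arguments.
Theorem lemma1 (n : nat) (w : seq nat)
  (Hw : all (fun c => 1 <= c <= n) w)
  (Hconn : connected_every_timestep n w)
  (x : nat) (Hx : 1 <= x <= n) :
  (forall t, 1 <= t -> t + degree n w x + 2 <= T w ->
     x \in letters (factor w (S w t) (S w (t + degree n w x + 1) - 1)))
  /\
  (degree n w x + 2 <= T w ->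
     x \in letters (factor w (S w (T w - degree n w x - 1)) (size w))).
Proof.
split.
  move=> t ht hT; have hw := T_ge2 (w := w) ltac:(lia).
  have := window_mem Hw Hconn Hx hw ht ltac:(lia).
  rewrite /letters mem_undup /endp ifT; last by lia.
  by rewrite addn1.
move=> hT; have hw := T_ge2 (w := w) ltac:(lia).
have := window_mem Hw Hconn Hx hw (a := T w - degree n w x) ltac:(lia) ltac:(lia).
have -> : T w - degree n w x + degree n w x = T w by lia.
rewrite /letters mem_undup /endp ltnn.
apply: factor_suffix; apply: (S_le hw); lia.
Qed.
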